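(* Let $p, r \in \mathbb N$ and $S(p,r,1):=\sum_{n=1}^\infty \frac{(-1)^{n+1}H_n^{(p)}}{n+r}$. Then \begin{align*} S(p,r,1) &=(-1)^{r}S_{p,1}^{+,-}+(-1)^{r-1}\overline{\zeta}(p+1) +\sum_{j=1}^{p}(-1)^{p-j+r}\overline{\zeta}(j)\overline{H}_{r-1}^{(p-j+1)}\\ &\quad +(-1)^{p+r-1}\overline{\zeta}(1)H_{r-1}^{(p)} +(-1)^{p+r}\sum_{n=1}^{r-1}\frac{\overline{H}_{n}}{n^{p}}\,. \end{align*}
   Context: $H_n^{(q)}=\sum_{j=1}^n j^{-q}$, $\overline{H}_n^{(q)}=\sum_{j=1}^n (-1)^{j-1}j^{-q}$, $\overline{H}_n=\overline{H}_n^{(1)}$, with value $0$ for $n=0$. $\overline{\zeta}(s)=\sum_{n\ge1}(-1)^{n-1}n^{-s}$, so $\overline{\zeta}(1)=\log2$. $S_{p,q}^{+,-}:=\sum_{n=1}^\infty (-1)^{n-1}H_n^{(p)}/n^q$. Empty sums are $0$. *)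

(* Defs.v *)
From Stdlib Require Import Reals.
From Coquelicot Require Import Coquelicot.
Open Scope R_scope.

(* Finite sum  \sum_{j=lo}^{hi} f j  (empty, i.e. 0, when hi < lo). *)
Definition fsum (f : nat -> R) (lo hi : nat) : R := sum_n_m f lo hi.

Fixpoint H (q n : nat) : R :=
  match n with
  | O => 0
  | S m => H q m + / (INR n) ^ q
  end.

Fixpoint Hbar (q n : nat) : R :=
  match n with
  | O => 0
  | S m => Hbar q m + (-1) ^ m / (INR n) ^ q
  end.

Definition zetabar (s : nat) : R :=
  Series (fun k : nat => (-1) ^ k / (INR (k + 1)) ^ s).

Definition Spm (p q : nat) : R :=
  Series (fun k : nat => (-1) ^ k * H p (k + 1) / (INR (k + 1)) ^ q).

Definition S_term (p r : nat) (k : nat) : R :=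
  (-1) ^ (k + 1 + 1) * H p (k + 1) / (INR (k + 1) + INR r).

(* Main.v *)
Require Import Defs.
From Stdlib Require Import Reals.
From Coquelicot Require Import Coquelicot.
From Stdlib Require Import Lra Lia.
Open Scope R_scope.

Lemma ser_plus (a b : nat -> R) (la lb : R) : is_series a la -> is_series b lb ->
  is_series (fun n => a n + b n) (la + lb).
Proof. intros A1 A2. exact (is_series_plus a b la lb A1 A2). Qed.
Lemma ser_opp (a : nat -> R) (la : R) : is_series a la -> is_series (fun n => - a n) (- la).
Proof. intros A1. exact (is_series_opp a la A1). Qed.
Lemma ser_scal (c : R) (a : nat -> R) (la : R) : is_series a la -> is_series (fun n => c * a n) (c * la).
Proof. intros A1. exact (is_series_scal c a la A1). Qed.
Lemma ser_shift (a : nat -> R) (l : R) : is_series a l -> is_series (fun k => a (S k)) (l - a O).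
Proof. intros A1. apply is_series_incr_1.
  assert (E: plus (l - a O) (a O) = l) by (unfold plus; simpl; ring). change (is_series a (plus (l - a O) (a O))). rewrite E. exact A1. Qed.
Lemma ser_zero : is_series (fun _ : nat => 0) 0.
Proof. apply is_series_Reals. intros e he. exists O. intros n _.
  replace (sum_f_R0 (fun _ => 0) n) with 0. unfold Rdist. rewrite Rminus_0_r, Rabs_R0. lra.
  induction n; simpl; [reflexivity| rewrite <- IHn; ring]. Qed.
Lemma ser_ext (a b : nat -> R) (l : R) : (forall n, a n = b n) -> is_series a l -> is_series b l.
Proof. intros A1 A2. exact (is_series_ext a b l A1 A2). Qed.
Lemma ser_val (a : nat -> R) (l l' : R) : l = l' -> is_series a l -> is_series a l'.
Proof. intros ->; auto. Qed.

Lemma fsum_0 f : fsum f 1 0 = 0.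
Proof. unfold fsum. rewrite sum_n_m_zero; [reflexivity| lia]. Qed.
Lemma fsum_S f n : fsum f 1 (S n) = fsum f 1 n + f (S n).
Proof. unfold fsum. rewrite sum_n_Sm; [reflexivity| lia]. Qed.
Lemma fsum_ext f g n : (forall j, (1 <= j <= n)%nat -> f j = g j) -> fsum f 1 n = fsum g 1 n.
Proof. intros. unfold fsum. apply sum_n_m_ext_loc. auto. Qed.
Lemma fsum_plus f g n : fsum (fun j => f j + g j) 1 n = fsum f 1 n + fsum g 1 n.
Proof. induction n. rewrite !fsum_0; ring. rewrite !fsum_S, IHn. ring. Qed.
Lemma fsum_mult c f n : fsum (fun j => c * f j) 1 n = c * fsum f 1 n.
Proof. induction n. rewrite !fsum_0; ring. rewrite !fsum_S, IHn. ring. Qed.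

Lemma ser_fsum (f : nat -> nat -> R) (v : nat -> R) p :
  (forall j, (1 <= j <= p)%nat -> is_series (f j) (v j)) ->
  is_series (fun k => fsum (fun j => f j k) 1 p) (fsum v 1 p).
Proof. induction p; intros Hs.
  - rewrite fsum_0. eapply ser_ext; [|exact ser_zero]. intros; simpl; rewrite fsum_0; reflexivity.
  - rewrite fsum_S. eapply ser_ext; [| apply ser_plus; [apply IHp| apply Hs]].
    + intros; simpl. rewrite fsum_S. reflexivity.
    + intros; apply Hs; lia.
    + lia.
Qed.

Lemma pS x n : x ^ (S n) = x * x ^ n. Proof. reflexivity. Qed.
Lemma m1sq n : (-1) ^ n * (-1) ^ n = 1.
Proof. rewrite <- Rpow_mult_distr. replace (-1 * -1) with 1 by ring. apply pow1. Qed.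
Lemma INR_S1 k : INR (k + 1) = INR k + 1.
Proof. rewrite plus_INR; simpl; ring. Qed.
Lemma INRk1_pos k : 0 < INR (k+1).
Proof. rewrite INR_S1. pose proof (pos_INR k). lra. Qed.

Lemma alt_ex (u : nat -> R) : (forall n, u (S n) <= u n) -> is_lim_seq u 0 ->
  ex_series (fun n => (-1) ^ n * u n).
Proof. intros Hd Hl. apply is_lim_seq_Reals in Hl.
  destruct (alternated_series u Hd Hl) as [l Hc]. exists l.
  apply is_series_Reals. exact Hc. Qed.

Lemma lim_inv : is_lim_seq (fun k => / INR (k + 1)) 0.
Proof.
  assert (A0 : is_lim_seq (fun n => / INR n) (Rbar_inv p_infty)).
  { apply is_lim_seq_inv. apply is_lim_seq_INR. discriminate. }
  simpl in A0. apply is_lim_seq_incr_1 in A0.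
  eapply is_lim_seq_ext; [|exact A0]. intros n; simpl. rewrite Nat.add_1_r. reflexivity.
Qed.

Lemma lim_inv_pow j : (1 <= j)%nat -> is_lim_seq (fun k => / INR (k + 1) ^ j) 0.
Proof. intros hj. apply is_lim_seq_le_le with (u := fun _ => 0) (w := fun k => / INR (k+1)).
  - intros n. pose proof (INRk1_pos n). split.
    + left. apply Rinv_0_lt_compat, pow_lt; lra.
    + apply Rinv_le_contravar; [lra|]. rewrite <- (pow_1 (INR (n+1))) at 1.
      apply Rle_pow; [rewrite INR_S1; pose proof (pos_INR n); lra| lia].
  - apply is_lim_seq_const.
  - exact lim_inv.
Qed.

Lemma zb_ex j : (1 <= j)%nat -> ex_series (fun k => (-1) ^ k / INR (k + 1) ^ j).
Proof. intros hj.
  assert (E: ex_series (fun k => (-1) ^ k * / INR (k + 1) ^ j)).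
  { apply alt_ex; [|apply lim_inv_pow; auto].
    intros n. pose proof (INRk1_pos n). apply Rinv_le_contravar. apply pow_lt; lra.
    apply pow_incr. pose proof (pos_INR n). rewrite !INR_S1, S_INR. lra. }
  destruct E as [l El]. exists l. eapply ser_ext; [|exact El]. intros; reflexivity. Qed.

Lemma H_S q n : H q (S n) = H q n + / INR (S n) ^ q. Proof. reflexivity. Qed.
Lemma Hbar_S q n : Hbar q (S n) = Hbar q n + (-1) ^ n / INR (S n) ^ q. Proof. reflexivity. Qed.

Lemma H_sum p n : H p (S n) = sum_f_R0 (fun k => / INR (k + 1) ^ p) n.
Proof. induction n.
  - simpl. ring.
  - rewrite H_S, IHn. change (sum_f_R0 (fun k => / INR (k + 1) ^ p) (S n)) with (sum_f_R0 (fun k => / INR (k + 1) ^ p) n + / INR (S n + 1) ^ p). replace (S n + 1)%nat with (S (S n)) by lia. reflexivity. Qed.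

Lemma H_ge1 p n : 1 <= H p (S n).
Proof. induction n.
  - simpl. rewrite pow1. lra.
  - rewrite H_S. assert (0 < / INR (S (S n)) ^ p).
    { apply Rinv_0_lt_compat, pow_lt. pose proof (pos_INR (S n)). rewrite S_INR. lra. }
    lra. Qed.

Lemma Spm_ex p : (1 <= p)%nat -> ex_series (fun k => (-1) ^ k * H p (k + 1) / INR (k + 1) ^ 1).
Proof. intros hp.
  assert (E: ex_series (fun k => (-1) ^ k * (H p (k + 1) / INR (k + 1)))).
  { apply alt_ex.
    - intros n. pose proof (INRk1_pos n) as P1. rewrite INR_S1 in P1.
      replace (S n + 1)%nat with (S (n + 1)) by lia. rewrite H_S.
      replace (n+1)%nat with (S n) by lia. rewrite !S_INR.
      pose proof (H_ge1 p n) as Hg. set (h := H p (S n)) in *.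
      set (x := INR n) in *.
      assert (Hq : 0 < (x + 1 + 1) ^ p) by (apply pow_lt; lra).
      assert (Hq2 : x + 1 + 1 <= (x + 1 + 1) ^ p).
      { rewrite <- (pow_1 (x+1+1)) at 1. apply Rle_pow; [lra|lia]. }
      apply Rmult_le_reg_r with ((x+1)*(x+1+1)); [nra|].
      unfold Rdiv. replace ((h + / (x+1+1)^p) * / (x+1+1) * ((x+1)*(x+1+1)))
        with (h*(x+1) + (x+1) / (x+1+1)^p) by (field; lra).
      replace (h * / (x+1) * ((x+1)*(x+1+1))) with (h * (x+1) + h) by (field; lra).
      assert ((x+1) / (x+1+1)^p <= 1).
      { apply Rmult_le_reg_r with ((x+1+1)^p); [lra|]. unfold Rdiv.
        rewrite Rmult_assoc, Rinv_l; lra. }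
      lra.
    - apply is_lim_seq_Reals.
      pose proof (Cesaro_1 (fun k => / INR (k + 1) ^ p) 0) as C.
      assert (C0 : Un_cv (fun k => / INR (k + 1) ^ p) 0) by (apply is_lim_seq_Reals, lim_inv_pow; auto).
      specialize (C C0). intros e he. destruct (C e he) as [N HN]. exists N. intros n hn.
      specialize (HN (S n) ltac:(lia)). simpl pred in HN. rewrite <- H_sum in HN.
      replace (n + 1)%nat with (S n) by lia. unfold Rdiv. exact HN. }
  destruct E as [l El]. exists l. eapply ser_ext; [|exact El]. intros; simpl. rewrite Rmult_1_r. unfold Rdiv. ring. Qed.

Lemma zb_ser j : (1 <= j)%nat -> is_series (fun k => (-1) ^ k / INR (k + 1) ^ j) (zetabar j).
Proof. intros hj. apply Series_correct, zb_ex; auto. Qed.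

Lemma C_ser r : is_series (fun k => (-1) ^ k / (INR (k + 1) + INR r))
  ((-1) ^ r * (zetabar 1 - Hbar 1 r)).
Proof. induction r.
  - eapply ser_ext; [|eapply ser_val; [|apply (zb_ser 1); lia]].
    + intros n; simpl. rewrite Rmult_1_r, Rplus_0_r. reflexivity.
    + simpl. ring.
  - apply ser_shift, ser_opp in IHr.
    eapply ser_ext; [|eapply ser_val; [|exact IHr]].
    + intros n. cbv beta. rewrite pS. replace (S n + 1)%nat with (S (n + 1)) by lia.
      rewrite !S_INR. pose proof (pos_INR r). pose proof (INRk1_pos n).
      field. lra.
    + rewrite Hbar_S, pS, pow_1, S_INR. change (INR (0+1)) with 1. change ((-1)^0) with 1. pose proof (pos_INR r). assert (E := m1sq r). set (Q := (-1)^r) in *. transitivity (-1*Q*(zetabar 1 - Hbar 1 r) + Q*Q/(INR r + 1)); [rewrite E; field; lra|].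
      field. lra.
Qed.

Lemma PF (m rr : R) p : 0 < m -> 0 < rr ->
  / (m ^ p * (m + rr)) =
  fsum (fun j => (-1) ^ (p - j) / rr ^ (p - j + 1) * / m ^ j) 1 p + (-1) ^ p / rr ^ p * / (m + rr).
Proof. intros hm hr. induction p.
  - rewrite fsum_0. simpl. field. lra.
  - rewrite fsum_S.
    rewrite (fsum_ext _ (fun j => (- / rr) * ((-1) ^ (p - j) / rr ^ (p - j + 1) * / m ^ j))).
    2:{ intros j hj. cbv beta. replace (S p - j + 1)%nat with (S (p - j + 1)) by lia. replace (S p - j)%nat with (S (p - j)) by lia.
        rewrite !pS. field. repeat split; try apply pow_nonzero; lra. }
    rewrite (fsum_mult (- / rr) (fun j => (-1) ^ (p - j) / rr ^ (p - j + 1) * / m ^ j)).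
    assert (E: fsum (fun j => (-1) ^ (p - j) / rr ^ (p - j + 1) * / m ^ j) 1 p =
       / (m ^ p * (m + rr)) - (-1) ^ p / rr ^ p * / (m + rr)) by (rewrite IHp; ring).
    rewrite E. rewrite Nat.sub_diag. rewrite !pS. simpl.
    assert (m ^ p <> 0) by (apply pow_nonzero; lra).
    assert (rr ^ p <> 0) by (apply pow_nonzero; lra).
    field. repeat split; lra.
Qed.

Definition Bt p r k := (-1) ^ k / (INR (k + 1) ^ p * (INR (k + 1) + INR r)).

Definition J p r := fsum (fun j => (-1) ^ (p - j) / INR r ^ (p - j + 1) * zetabar j) 1 p.

Lemma Bval p r : (1 <= r)%nat -> is_series (Bt p r)
  (J p r + (-1) ^ p / INR r ^ p * ((-1) ^ r * (zetabar 1 - Hbar 1 r))).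
Proof. intros hr. unfold J.
  assert (hr' : 0 < INR r) by (apply lt_0_INR; lia).
  eapply ser_ext; [|apply ser_plus; [apply (ser_fsum (fun j k => (-1) ^ (p - j) / INR r ^ (p - j + 1) * ((-1) ^ k / INR (k + 1) ^ j))) | apply ser_scal, C_ser]].
  - intros k. unfold Bt.
    assert (E := PF (INR (k+1)) (INR r) p (INRk1_pos k) hr').
    transitivity ((-1)^k * / (INR (k + 1) ^ p * (INR (k + 1) + INR r))); [|reflexivity].
    rewrite E, Rmult_plus_distr_l.
    rewrite <- (fsum_mult ((-1)^k) (fun j => (-1) ^ (p - j) / INR r ^ (p - j + 1) * / INR (k+1) ^ j)).
    f_equal; [apply fsum_ext; intros; unfold Rdiv; ring | unfold Rdiv; ring].
  - intros j hj. simpl. apply ser_scal, zb_ser. lia.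
Qed.

Lemma Bval0 p : is_series (Bt p 0) (zetabar (p + 1)).
Proof. eapply ser_ext; [|apply (zb_ser (p+1)); lia]. intros k. unfold Bt. simpl INR at 2.
  rewrite Rplus_0_r, pow_add, pow_1. reflexivity. Qed.

Lemma m1_2 k : (-1) ^ (k + 1 + 1) = (-1) ^ k.
Proof. rewrite !pow_add. simpl. ring. Qed.

Lemma Tstep p r (t a : R) : is_series (S_term p r) t -> is_series (Bt p r) a ->
  is_series (S_term p (S r)) (- t + a).
Proof. intros Ht Ha. apply ser_shift, ser_opp in Ht. apply ser_shift in Ha.
  eapply ser_ext; [|eapply ser_val; [|exact (ser_plus _ _ _ _ Ht Ha)]].
  - intros k. unfold S_term, Bt. rewrite !m1_2. replace (S k + 1)%nat with (S (k + 1)) by lia.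
    rewrite H_S. rewrite !S_INR, !INR_S1. rewrite pS.
    pose proof (pos_INR k) as P1. pose proof (pos_INR r) as P2.
    assert ((INR k + 1 + 1) ^ p <> 0) by (apply pow_nonzero; lra).
    set (h := Defs.H p (k+1)). set (q := (-1)^k). set (y := (INR k + 1 + 1) ^ p) in *. set (x := INR k) in *. set (z := INR r) in *. field. lra.
  - unfold S_term, Bt. simpl. rewrite pow1. pose proof (pos_INR r). field. lra.
Qed.

Definition Fs p s := fsum (fun j => (-1) ^ (p - j + S s) * zetabar j * Hbar (p - j + 1) s) 1 p.
Definition Gs p s := fsum (fun n => Hbar 1 n / INR n ^ p) 1 s.
Definition V p s := (-1) ^ (S s) * Spm p 1 + (-1) ^ s * zetabar (p + 1) + Fs p s
  + (-1) ^ (p + s) * zetabar 1 * H p s + (-1) ^ (p + s + 1) * Gs p s.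

Lemma Fs0 p : Fs p 0 = 0.
Proof. unfold Fs. rewrite (fsum_ext _ (fun j => 0 * 0)). rewrite (fsum_mult 0 (fun _ => 0)). ring.
  intros j _. simpl. ring. Qed.

Lemma FsS p s : Fs p (S s) = - Fs p s + J p (S s).
Proof. unfold Fs, J.
  rewrite (fsum_ext _ (fun j => (-1) * ((-1) ^ (p - j + S s) * zetabar j * Hbar (p - j + 1) s)
     + (-1) ^ (p - j) / INR (S s) ^ (p - j + 1) * zetabar j)).
  - rewrite fsum_plus. rewrite (fsum_mult (-1) (fun j => (-1) ^ (p - j + S s) * zetabar j * Hbar (p - j + 1) s)). ring.
  - intros j hj. rewrite Hbar_S.
    assert (E : (-1) ^ (p - j + S (S s)) * (-1) ^ s = (-1) ^ (p - j)).
    { rewrite !pow_add, !pS. transitivity ((-1) ^ (p - j) * ((-1) ^ s * (-1) ^ s)); [ring|].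
      rewrite m1sq. ring. }
    assert (INR (S s) ^ (p - j + 1) <> 0) by (apply pow_nonzero; rewrite S_INR; pose proof (pos_INR s); lra).
    rewrite <- E. rewrite !pow_add, !pS. field. assert (INR (S s) <> 0) by (rewrite S_INR; pose proof (pos_INR s); lra). split; [auto| apply pow_nonzero; auto].
Qed.

Lemma main p s : (1 <= p)%nat -> is_series (S_term p (S s)) (V p s).
Proof. intros hp. induction s.
  - assert (S0 : is_series (S_term p 0) (Spm p 1)).
    { eapply ser_ext; [|apply Series_correct, Spm_ex; auto].
      intros k. unfold S_term. rewrite m1_2. simpl INR at 2. rewrite Rplus_0_r, pow_1. reflexivity. }
    eapply ser_val; [|exact (Tstep _ _ _ _ S0 (Bval0 p))].
    unfold V. rewrite Fs0. unfold Gs. rewrite fsum_0. simpl H. rewrite Nat.add_0_r. simpl pow. ring.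
  - eapply ser_val; [|exact (Tstep _ _ _ _ IHs (Bval p (S s) ltac:(lia)))].
    unfold V. rewrite FsS. unfold Gs. rewrite fsum_S. fold (Gs p s). rewrite H_S.
    replace (p + S s)%nat with (S (p + s)) by lia. replace (S (p + s) + 1)%nat with (S (S (p + s))) by lia.
    replace (p + s + 1)%nat with (S (p + s)) by lia.
    rewrite !pS, pow_add.
    assert (INR (S s) ^ p <> 0) by (apply pow_nonzero; rewrite S_INR; pose proof (pos_INR s); lra).
    field. auto.
Qed.

Theorem lemma3 (p r : nat) (hp : (1 <= p)%nat) (hr : (1 <= r)%nat) :
  is_series (S_term p r)
    ((-1) ^ r * Spm p 1
     + (-1) ^ (r - 1) * zetabar (p + 1)
     + fsum (fun j => (-1) ^ (p - j + r) * zetabar j * Hbar (p - j + 1) (r - 1)) 1 p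
     + (-1) ^ (p + r - 1) * zetabar 1 * H p (r - 1)
     + (-1) ^ (p + r) * fsum (fun n => Hbar 1 n / (INR n) ^ p) 1 (r - 1)).
Proof. destruct r as [|s]; [lia|].
  replace (S s - 1)%nat with s by lia. replace (p + S s - 1)%nat with (p + s)%nat by lia.
  replace (p + S s)%nat with (p + s + 1)%nat by lia.
  exact (main p s hp).
Qed.
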